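(* Let $G$ and $H$ be finite simple graphs with ${\rm diam}(G\diamond H)=2$. Then $$E((G\diamond H)_{SR})=TW(G\diamond H)\cup E(\overline{G}\,\Box\,\overline{H})\cup E(G\times\overline{H})\cup E(\overline{G}\times H),$$ where all these edge sets are viewed as sets of unordered pairs of elements of $V(G)\times V(H)$.
   Context: The modular product $G\diamond H$ has vertex set $V(G)\times V(H)$; distinct vertices $(g,h)$ and $(g',h')$ are adjacent iff ($g=g'$ and $hh'\in E(H)$), or ($gg'\in E(G)$ and $h=h'$), or ($gg'\in E(G)$ and $hh'\in E(H)$), or ($g\neq g'$, $h\neq h'$, $gg'\notin E(G)$ and $hh'\notin E(H)$). $\overline{X}$ is the complement of $X$. In the Cartesian product $A\Box B$, $(a,b)(a',b')$ is an edge iff ($a=a'$ and $bb'\in E(B)$) or ($aa'\in E(A)$ and $b=b'$); in the direct product $A\times B$ it is an edge iff $aa'\in E(A)$ and $bb'\in E(B)$. For a graph $X$, $TW(X)$ is the set of edges $uv$ of $X$ with $N_X[u]=N_X[v]$. Two distinct vertices $u,v$ of $X$ in the same component are mutually maximally distant if there is no $x\in N_X(u)$ with $d_X(x,v)=d_X(u,v)+1$ and no $y\in N_X(v)$ with $d_X(y,u)=d_X(u,v)+1$; the strong resolving graph $X_{SR}$ has as edges exactly the mutually maximally distant pairs. *)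

(* Defs.v *)
From mathcomp Require Import all_boot.
Set Implicit Arguments. Unset Strict Implicit. Unset Printing Implicit Defensive.

Definition simple_graph (T : finType) (e : rel T) : Prop :=
  symmetric e /\ irreflexive e.

Section Graphs.
Variables (T1 T2 : finType).

Definition compl_graph (T : finType) (e : rel T) : rel T :=
  fun x y => (x != y) && ~~ e x y.

Definition modular_prod (G : rel T1) (H : rel T2) : rel (T1 * T2) :=
  fun p q =>
    (p != q) &&
    [|| (p.1 == q.1) && H p.2 q.2,
        G p.1 q.1 && (p.2 == q.2),
        G p.1 q.1 && H p.2 q.2
      | [&& p.1 != q.1, p.2 != q.2, ~~ G p.1 q.1 & ~~ H p.2 q.2]].

Definition cart_prod (A : rel T1) (B : rel T2) : rel (T1 * T2) :=
  fun p q => ((p.1 == q.1) && B p.2 q.2) || (A p.1 q.1 && (p.2 == q.2)).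

Definition direct_prod (A : rel T1) (B : rel T2) : rel (T1 * T2) :=
  fun p q => A p.1 q.1 && B p.2 q.2.
End Graphs.

Section Distance.
Variables (T : finType) (X : rel T).

Fixpoint ball (k : nat) (u : T) : {set T} :=
  match k with
  | 0 => [set u]
  | k'.+1 => ball k' u :|: [set y | [exists x in ball k' u, X x y]]
  end.

(* graph distance (meaningful when u and v are in the same component:
   it is then the least k with v in ball k u, which is < #|T|) *)
Definition gdist (u v : T) : nat :=
  find (fun k => v \in ball k u) (iota 0 #|T|).

Definition gconnected : Prop := forall u v : T, connect X u v.

Definition diam : nat := \max_(p : T * T) gdist p.1 p.2.

Definition closed_nbhd (u : T) : {set T} := u |: [set x | X u x].

Definition twin_edge (u v : T) : bool :=
  X u v && (closed_nbhd u == closed_nbhd v).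

Definition mmd (u v : T) : bool :=
  [&& u != v, connect X u v,
      ~~ [exists x, X u x && (gdist x v == (gdist u v).+1)] &
      ~~ [exists y, X v y && (gdist y u == (gdist u v).+1)]].

Definition strong_resolving_graph : rel T := mmd.
End Distance.

(* Main.v *)
Require Import Defs.
From mathcomp Require Import all_boot.
Set Implicit Arguments. Unset Strict Implicit. Unset Printing Implicit Defensive.

Section Gen.
Variables (T : finType) (X : rel T).
Hypothesis sX : symmetric X.
Hypothesis iX : irreflexive X.
Hypothesis cX : gconnected X.
Hypothesis dX : diam X = 2.

Lemma gd_le2 u v : gdist X u v <= 2.
Proof.
rewrite -dX /diam.
exact: (@leq_bigmax _ (fun p : T * T => gdist X p.1 p.2) (u, v)).
Qed.

Lemma ball1 u v : (v \in ball X 1 u) = (v == u) || X u v.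
Proof.
rewrite /= in_setU in_set1; congr (_ || _).
rewrite inE; apply/existsP/idP => [[x /andP [/set1P -> ->]] //|h].
by exists u; rewrite set11 h.
Qed.

Lemma gd_val u v : u != v -> gdist X u v = if X u v then 1 else 2.
Proof.
move=> uv.
have := gd_le2 u v.
have : #|[set u; v]| <= #|T| by exact: max_card.
rewrite cards2 uv /gdist.
case: #|T| => [|[|n]] //= _.
have := ball1 u v; rewrite /= => ->.
rewrite in_set1 eq_sym (negbTE uv) /=.
by case: (X u v) => //=; case: find.
Qed.

Lemma gd_refl u : gdist X u u = 0.
Proof.
rewrite /gdist.
have : 0 < #|T| by apply/card_gt0P; exists u.
by case: #|T| => //= n _; rewrite set11.
Qed.

Lemma mmd_char u v :
  mmd X u v = twin_edge X u v || ((u != v) && ~~ X u v).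
Proof.
rewrite /mmd /twin_edge.
case: (eqVneq u v) => [<-|uv]; first by rewrite iX.
rewrite cX /= gd_val //.
have gd2 : forall x y, (gdist X x y == 2) = (x != y) && ~~ X x y.
  move=> x y; case: (eqVneq x y) => [->|xy]; first by rewrite gd_refl.
  by rewrite gd_val //; case: (X x y).
case: (boolP (X u v)) => uvX /=; last first.
  apply/andP; split; apply/negP => /existsP [x /andP [_ /eqP e]];
    by have := gd_le2 x v; have := gd_le2 x u; rewrite e.
rewrite !orbF.
apply/andP/eqP => [[/existsPn h1 /existsPn h2]|e].
  apply/setP => w; rewrite /closed_nbhd !inE.
  case: (eqVneq w u) => [->|wu]; first by rewrite sX uvX orbT.
  case: (eqVneq w v) => [->|wv] /=; first by [].
  apply/idP/idP => h.
    have := h1 w; rewrite h gd2 wv /= negbK sX; exact.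
  have := h2 w; rewrite h gd2 wu /= negbK sX; exact.
split; apply/existsPn => x; apply/negP => /andP [hx]; rewrite gd2 => /andP [xn nX].
  have : x \in closed_nbhd X u by rewrite !inE hx orbT.
  by rewrite e !inE (negbTE xn) sX (negbTE nX).
have : x \in closed_nbhd X v by rewrite !inE hx orbT.
by rewrite -e !inE (negbTE xn) sX (negbTE nX).
Qed.
End Gen.

Theorem mainTheorem7 (T1 T2 : finType) (G : rel T1) (H : rel T2)
  (hG : simple_graph G) (hH : simple_graph H)
  (hconn : gconnected (modular_prod G H))
  (hdiam : diam (modular_prod G H) = 2) :
  forall p q : T1 * T2,
    strong_resolving_graph (modular_prod G H) p q =
    [|| twin_edge (modular_prod G H) p q,
        cart_prod (compl_graph G) (compl_graph H) p q,
        direct_prod G (compl_graph H) p q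
      | direct_prod (compl_graph G) H p q].
Proof.
case: hG => sG iG; case: hH => sH iH.
have sM : symmetric (modular_prod G H).
  move=> p q; rewrite /modular_prod eq_sym [q.1 == _]eq_sym [q.2 == _]eq_sym.
  by rewrite (sG q.1) (sH q.2).
have iM : irreflexive (modular_prod G H) by move=> p; rewrite /modular_prod eqxx.
move=> [a b] [c d].
rewrite /strong_resolving_graph mmd_char //; congr (_ || _).
rewrite /modular_prod /cart_prod /direct_prod /compl_graph /= xpair_eqE.
case: (eqVneq a c) => [<-|ac]; case: (eqVneq b d) => [<-|bd] //=;
  rewrite ?iG ?iH ?andbF //=;
  by case: (G _ _); case: (H _ _).
Qed.
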